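(* Let $\mathcal{D}\in\mathbb{C}^{\mathbf{N}(s)\times\mathbf{N}(s)}$ with $\mathrm{ind}(\mathcal{D})=k$, and let $\mathcal{B}\in\mathscr{R}(\mathcal{D}^k)$. Then $\mathcal{D}^{c,\dagger}*_s\mathcal{B}$ is the unique solution $\mathcal{Z}$ of the multilinear system $\mathcal{D}*_s\mathcal{Z}=\mathcal{B}$ lying in $\mathscr{R}(\mathcal{D}^\dagger*_s\mathcal{D}^k)$.
   Context: For positive integers $N_1,\dots,N_s$ write $\mathbf{N}(s)=N_1\times\cdots\times N_s$. For $\mathcal{A}\in\mathbb{C}^{\mathbf{I}(m)\times\mathbf{K}(p)}$ and $\mathcal{B}\in\mathbb{C}^{\mathbf{K}(p)\times\mathbf{J}(n)}$ the Einstein product is the tensor $\mathcal{A}*_p\mathcal{B}\in\mathbb{C}^{\mathbf{I}(m)\times\mathbf{J}(n)}$ with entries $(\mathcal{A}*_p\mathcal{B})_{i_1\dots i_m j_1\dots j_n}=\sum_{k_1,\dots,k_p}\mathcal{A}_{i_1\dots i_m k_1\dots k_p}\mathcal{B}_{k_1\dots k_p j_1\dots j_n}$; the case $n=0$ (so $\mathcal{B}\in\mathbb{C}^{\mathbf{K}(p)}$) is allowed. For $\mathcal{D}\in\mathbb{C}^{\mathbf{N}(s)\times\mathbf{N}(s)}$, powers are $\mathcal{D}^0=\mathcal{I}$, $\mathcal{D}^{j+1}=\mathcal{D}*_s\mathcal{D}^j$, where $\mathcal{I}$ is the identity tensor with entries $\mathcal{I}_{i_1\dots i_s j_1\dots j_s}=\prod_{t=1}^s\delta_{i_tj_t}$.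 The conjugate transpose $\mathcal{A}^*$ of $\mathcal{A}\in\mathbb{C}^{\mathbf{M}(m)\times\mathbf{N}(n)}$ has entries $(\mathcal{A}^* )_{j_1\dots j_n i_1\dots i_m}=\overline{\mathcal{A}_{i_1\dots i_m j_1\dots j_n}}$. For $\mathcal{A}\in\mathbb{C}^{\mathbf{M}(m)\times\mathbf{N}(n)}$, $\mathscr{R}(\mathcal{A})=\{\mathcal{A}*_n\mathcal{E}:\mathcal{E}\in\mathbb{C}^{\mathbf{N}(n)}\}$ and $\mathscr{N}(\mathcal{A})=\{\mathcal{F}\in\mathbb{C}^{\mathbf{N}(n)}:\mathcal{A}*_n\mathcal{F}=\mathcal{O}\}$. The index $\mathrm{ind}(\mathcal{D})$ of $\mathcal{D}\in\mathbb{C}^{\mathbf{N}(s)\times\mathbf{N}(s)}$ is the smallest nonnegative integer $k$ with $\dim\mathscr{R}(\mathcal{D}^k)=\dim\mathscr{R}(\mathcal{D}^{k+1})$. The Moore–Penrose inverse $\mathcal{D}^\dagger$ of $\mathcal{D}\in\mathbb{C}^{\mathbf{N}(s)\times\mathbf{N}(s)}$ is the unique $\mathcal{Y}$ with $\mathcal{D}*_s\mathcal{Y}*_s\mathcal{D}=\mathcal{D}$, $\mathcal{Y}*_s\mathcal{D}*_s\mathcal{Y}=\mathcal{Y}$, $(\mathcal{D}*_s\mathcal{Y})^*=\mathcal{D}*_s\mathcal{Y}$, $(\mathcal{Y}*_s\mathcal{D})^*=\mathcal{Y}*_s\mathcal{D}$. With $k=\mathrm{ind}(\mathcal{D})$,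 the Drazin inverse $\mathcal{D}^{\mathrm D}$ is the unique $\mathcal{Y}$ with $\mathcal{Y}*_s\mathcal{D}^{k+1}=\mathcal{D}^k$, $\mathcal{Y}*_s\mathcal{D}*_s\mathcal{Y}=\mathcal{Y}$, $\mathcal{D}*_s\mathcal{Y}=\mathcal{Y}*_s\mathcal{D}$. The CMP inverse is $\mathcal{D}^{c,\dagger}=\mathcal{D}^\dagger*_s\mathcal{D}*_s\mathcal{D}^{\mathrm D}*_s\mathcal{D}*_s\mathcal{D}^\dagger$. *)

(* Defs.v *)
From HB Require Import structures.
From mathcomp Require Import all_boot all_order all_algebra.
From mathcomp Require Import reals complex.
Set Implicit Arguments. Unset Strict Implicit. Unset Printing Implicit Defensive.
Import Order.TTheory GRing.Theory Num.Theory.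
Local Open Scope ring_scope.

Definition mindex (s : nat) (N : 'I_s -> nat) : finType :=
  {dffun forall t : 'I_s, 'I_(N t)}.

Section Tensors.
Variable R : realType.
Local Notation C := R[i].
Variable I : finType. (* I = N(s), the multi-index set *)

Definition tsq := {ffun I * I -> C}.
Definition tvec := {ffun I -> C^o}.

Definition ein (A B : tsq) : tsq :=
  [ffun ij => \sum_(k : I) A (ij.1, k) * B (k, ij.2)].
Definition einv (A : tsq) (E : tvec) : tvec :=
  [ffun i => \sum_(k : I) A (i, k) * E k].

Definition tid : tsq := [ffun ij => if ij.1 == ij.2 then 1 else 0].

Fixpoint tpow (D : tsq) (j : nat) : tsq :=
  if j is j'.+1 then ein D (tpow D j') else tid.

Definition tconj (A : tsq) : tsq := [ffun ij => (A (ij.2, ij.1))^*].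

Definition trange (A : tsq) : {vspace tvec} := limg (linfun (einv A)).

Definition is_index (D : tsq) (k : nat) : Prop :=
  \dim (trange (tpow D k)) = \dim (trange (tpow D k.+1)) /\
  (forall j, (j < k)%N -> \dim (trange (tpow D j)) <> \dim (trange (tpow D j.+1))).

Definition is_MP (D Y : tsq) : Prop :=
  [/\ ein D (ein Y D) = D, ein Y (ein D Y) = Y,
      tconj (ein D Y) = ein D Y & tconj (ein Y D) = ein Y D].

Definition is_Drazin (D : tsq) (k : nat) (Y : tsq) : Prop :=
  [/\ ein Y (tpow D k.+1) = tpow D k, ein Y (ein D Y) = Y & ein D Y = ein Y D].

Definition in_range (A : tsq) (B : tvec) : Prop := exists E : tvec, B = einv A E.

End Tensors.

(* Main.v *)
Require Import Defs.
From HB Require Import structures.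
From mathcomp Require Import all_boot all_order all_algebra.
From mathcomp Require Import reals complex.
Import GRing.Theory Num.Theory.
Local Open Scope ring_scope.

Section Aux.
Variable R : realType.
Variable I : finType.
Local Notation T := (tsq R I).
Local Notation V := (tvec R I).

Lemma einA (A B C : T) : ein A (ein B C) = ein (ein A B) C.
Proof.
apply/ffunP=> [[i j]]; rewrite !ffunE /=.
under eq_bigr do rewrite ffunE /= big_distrr.
rewrite exchange_big /=; apply: eq_bigr => l _.
rewrite ffunE /= big_distrl; apply: eq_bigr => m _; by rewrite mulrA.
Qed.

Lemma einvA (A B : T) (E : V) : einv A (einv B E) = einv (ein A B) E.
Proof.
apply/ffunP=> i; rewrite !ffunE /=.
under eq_bigr do rewrite ffunE /= big_distrr.
rewrite exchange_big /=; apply: eq_bigr => l _.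
rewrite ffunE /= big_distrl; apply: eq_bigr => m _; by rewrite mulrA.
Qed.

Lemma ein1r (A : T) : ein A (tid R I) = A.
Proof.
apply/ffunP=> [[i j]]; rewrite !ffunE /= (bigD1 j) //= ffunE /= eqxx mulr1.
rewrite big1 ?addr0 // => l /negbTE Hl; by rewrite ffunE /= Hl mulr0.
Qed.

Lemma ein1l (A : T) : ein (tid R I) A = A.
Proof.
apply/ffunP=> [[i j]]; rewrite !ffunE /= (bigD1 i) //= ffunE /= eqxx mul1r.
rewrite big1 ?addr0 // => l; rewrite eq_sym => /negbTE Hl; by rewrite ffunE /= Hl mul0r.
Qed.

End Aux.

Theorem mainTheorem14 (R : realType) (s : nat) (N : 'I_s -> nat)
    (HN : forall t, (0 < N t)%N)
    (D : tsq R (mindex N)) (k : nat) (Hk : is_index D k)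
    (Ddag : tsq R (mindex N)) (HMP : is_MP D Ddag)
    (DD : tsq R (mindex N)) (HDr : is_Drazin D k DD)
    (B : tvec R (mindex N)) (HB : in_range (tpow D k) B) :
  let Dcdag := ein Ddag (ein D (ein DD (ein D Ddag))) in
  let Z0 := einv Dcdag B in
  (einv D Z0 = B /\ in_range (ein Ddag (tpow D k)) Z0) /\
  (forall Z : tvec R (mindex N),
      einv D Z = B -> in_range (ein Ddag (tpow D k)) Z -> Z = Z0).
Proof.
case: HMP => H1 H2 _ _; case: HDr => Y1 Y2 Y3.
have DPDk : ein D (ein Ddag (tpow D k)) = tpow D k.
  clear -H1 Y1 Y3; case: k Y1 => [|k] /= Y1.
    rewrite ein1r in Y1 *.
    have Y1' : ein D DD = tid R (mindex N) by rewrite Y3 Y1.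
    rewrite ein1r.
    have -> : ein D Ddag = ein (ein D Ddag) (ein D DD) by rewrite Y1' ein1r.
    by rewrite einA -[ein (ein D Ddag) D]einA H1.
  by rewrite !einA -[ein (ein D Ddag) D]einA H1.
have DYDk : ein D (ein DD (tpow D k)) = tpow D k.
  by rewrite einA Y3 -einA.
case: HB => E ->.
move=> Dc Z0.
have Z0E : forall E0, einv Dc (einv (tpow D k) E0) = einv Ddag (einv (tpow D k) E0).
  move=> E0; rewrite !einvA; congr einv.
  by rewrite /Dc -!einA DPDk DYDk.
split; first split.
- by rewrite /Z0 Z0E !einvA -einA DPDk.
- by exists E; rewrite /Z0 Z0E einvA.
- move=> Z HZ [F HF]; subst Z; rewrite /Z0.
  have -> : einv (tpow D k) E = einv (tpow D k) F.
    by rewrite -HZ einvA DPDk.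
  by rewrite Z0E einvA.
Qed.
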